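(* Let $A=[1,1,\dots,1]\in\mathbb R^{1\times N}$, $\vec w\in\mathbb R^N$ with $\sum_{i=1}^N w_i>0$, $b=A\vec w$, and let $\vec x$ be the minimizer of $\frac12\|\vec x-\vec w\|_2^2$ over $\vec x\in\mathbb R^N$ subject to $A\vec x=b$ and $x_i\ge0$ for all $i$. If $w_{i_1}\ge w_{i_2}>0$, then $x_{i_1}=0$ implies $x_{i_2}=0$. *)

(* Defs.v *)
From mathcomp Require Import all_boot all_order all_algebra.
From mathcomp Require Import reals.
Set Implicit Arguments. Unset Strict Implicit. Unset Printing Implicit Defensive.
Import Order.TTheory GRing.Theory Num.Theory.
Local Open Scope ring_scope.

Definition Aones (R : realType) (N : nat) : 'M[R]_(1, N) := const_mx 1.

Definition obj (R : realType) (N : nat) (w x : 'cV[R]_N) : R :=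
  2^-1 * \sum_(i < N) (x i 0 - w i 0) ^+ 2.

Definition feasible (R : realType) (N : nat) (w x : 'cV[R]_N) : Prop :=
  Aones R N *m x = Aones R N *m w /\ forall i, 0 <= x i 0.

Definition is_minimizer (R : realType) (N : nat) (w x : 'cV[R]_N) : Prop :=
  feasible w x /\ forall y, feasible w y -> obj w x <= obj w y.

(* Main.v *)
Require Import Defs.
From mathcomp Require Import all_boot all_order all_algebra.
From mathcomp Require Import reals.
From mathcomp Require Import lra.
Import Order.TTheory GRing.Theory Num.Theory.
Local Open Scope ring_scope.

Lemma sum2 (R : realType) (N : nat) (i1 i2 : 'I_N) (f : 'I_N -> R) :
  i1 != i2 -> \sum_j f j = f i1 + f i2 + \sum_(j | (j != i1) && (j != i2)) f j.
Proof.
move=> h; rewrite (bigD1 i1) //= (bigD1 i2) /=; last by rewrite eq_sym.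
by rewrite addrA; congr (_ + _); apply: eq_bigl => j; rewrite andbC.
Qed.

Lemma mulsum (R : realType) (N : nat) (v : 'cV[R]_N) :
  (Aones R N *m v) 0 0 = \sum_j v j 0.
Proof. by rewrite !mxE; apply: eq_bigr => j _; rewrite mxE mul1r. Qed.

Theorem lemma4 (R : realType) (N : nat) (w x : 'cV[R]_N) (i1 i2 : 'I_N) :
  0 < \sum_(i < N) w i 0 ->
  is_minimizer w x ->
  w i2 0 <= w i1 0 -> 0 < w i2 0 ->
  x i1 0 = 0 -> x i2 0 = 0.
Proof.
move=> _ [[Hs Hp] Hmin] Hw _ Hx1.
have [e|hne] := eqVneq i1 i2; first by rewrite -e.
have := Hp i2; rewrite le_eqVlt => /orP[/eqP<-//|Hx2].
exfalso.
set t := x i2 0 / 2.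
pose y : 'cV[R]_N := \col_j (if j == i1 then t else if j == i2 then x i2 0 - t else x j 0).
have yi1 : y i1 0 = t by rewrite mxE eqxx.
have yi2 : y i2 0 = x i2 0 - t by rewrite mxE eq_sym (negbTE hne) eqxx.
have yo : forall j, (j != i1) && (j != i2) -> y j 0 = x j 0.
  by move=> j /andP[/negbTE h1 /negbTE h2]; rewrite mxE h1 h2.
have Fy : feasible w y.
  split; last first.
    move=> j; rewrite mxE; case: ifP => _; first by rewrite /t; lra.
    case: ifP => _; [rewrite /t; lra | exact: Hp].
  rewrite -Hs; apply/matrixP => a b; rewrite !ord1 !mulsum.
  rewrite (@sum2 _ _ _ _ _ hne) (@sum2 _ _ _ _ (fun j => x j 0) hne) yi1 yi2 Hx1.
  rewrite (eq_bigr (fun j => x j 0)); last exact: yo.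
  lra.
have := Hmin y Fy; rewrite /obj.
rewrite (@sum2 _ _ _ _ _ hne) (@sum2 _ _ _ _ (fun j => (y j 0 - w j 0) ^+ 2) hne) yi1 yi2 Hx1.
have E : \sum_(j | (j != i1) && (j != i2)) (y j 0 - w j 0) ^+ 2 =
  \sum_(j | (j != i1) && (j != i2)) (x j 0 - w j 0) ^+ 2.
  by apply: eq_bigr => j hj; rewrite yo.
rewrite E.
rewrite /t; nra.
Qed.
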